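(* Let $\mathcal G$ be a grid, $\delta<c(\mathcal G)/2$, and $\vec a,\vec b\in\mathbb{R}^n$ with $\inf_{\vec g\in\mathrm{Grid}_{\mathcal G}}\|\vec a-\vec g\|_\infty\le\delta$ and $\vec b\ge\vec a$. If $\mathrm{push}_{\mathcal L}(\vec a)=\mathrm{push}_{\mathcal L}(\vec b)$ for $\mathcal L=\mathcal L_{\mathsf U^{\mathcal G}_\delta\mathsf M^{\mathcal G}_\delta(\vec a)}$, then $\mathsf M^{\mathcal G}_\delta(\vec a)=\mathsf M^{\mathcal G}_\delta(\vec b)$.
   Context: A grid is $\mathcal G=\prod_i\mathcal G^i$, $\mathcal G^i:[k_i]\to\mathbb{R}$; $\mathrm{Grid}_{\mathcal G}=\{\vec x:x_j\in\mathrm{Im}\,\mathcal G^j\text{ for some }j\}$; $c(\mathcal G)=\min\{\|\vec x-\vec y\|_\infty:\vec x\ne\vec y\in\mathrm{Im}\,\mathcal G\}$. The merge function $\mathsf M^{\mathcal G}_\delta$ acts coordinatewise: $x_i\mapsto\mathcal G^i(k)$ if $x_i\in[\mathcal G^i(k)-\delta,\mathcal G^i(k)+\delta]$, else $x_i\mapsto x_i$. The unmerge function on $\mathrm{Grid}_{\mathcal G}$: for $\vec x\in\mathrm{Grid}_{\mathcal G}$ let $\mathcal I_{\vec x}=\{i:\inf_k|x_i-\mathcal G^i(k)|\le\delta\}$ and $\mathsf U^{\mathcal G}_\delta(\vec x)=\mathsf M^{\mathcal G}_\delta(\vec x)+\delta\sum_{i\in\mathcal I_{\vec x}}\vec e_i$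 ($\vec e_i$ standard basis vectors). For $\vec p\in\mathbb{R}^n$, $\mathcal L_{\vec p}=\{\vec p+t\vec1\}$, and $\mathrm{push}_{\mathcal L}(\vec q)=\min\{\vec y\in\mathcal L:\vec y\ge\vec q\}$. *)

(* Defs.v *)
From mathcomp Require Import all_boot all_order all_algebra.
From mathcomp Require Import reals.
Unset Printing Implicit Defensive.
Import Order.TTheory GRing.Theory Num.Theory.
Local Open Scope ring_scope.

Section Grids.
Variables (R : realType) (n : nat).

(* A grid G = prod_i G^i with G^i : [k_i] -> R, encoded by k : 'I_n -> nat and
   G i : 'I_(k i) -> R. *)
Definition grid (k : 'I_n -> nat) := forall i : 'I_n, 'I_(k i) -> R.

Definition supnorm (x : 'rV[R]_n) : R := \big[Num.max/0]_(i < n) `|x 0 i|.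

Definition vle (x y : 'rV[R]_n) : Prop := forall i, x 0 i <= y 0 i.

Variable (k : 'I_n -> nat).
Variable G : forall i : 'I_n, 'I_(k i) -> R.

Definition in_ImG (x : 'rV[R]_n) : Prop := forall i, exists j, x 0 i = G i j.
Definition in_GridG (x : 'rV[R]_n) : Prop := exists i, exists j, x 0 i = G i j.

(* delta < c(G)/2, where c(G) = min { ||x - y||_oo : x <> y in Im G } *)
Definition delta_lt_half_c (delta : R) : Prop :=
  forall x y, in_ImG x -> in_ImG y -> x <> y -> delta < supnorm (x - y) / 2.

Definition mergeG (delta : R) (x : 'rV[R]_n) : 'rV[R]_n :=
  \row_i (match [pick j | `|x 0 i - G i j| <= delta] with
          | Some j => G i j
          | None => x 0 i
          end).

Definition unmergeG (delta : R) (x : 'rV[R]_n) : 'rV[R]_n :=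
  mergeG delta x +
  \sum_(i < n | [exists j, `|x 0 i - G i j| <= delta]) delta *: delta_mx 0 i.

End Grids.

Arguments mergeG {R n k} G delta x.
Arguments grid {R n} k.
Arguments supnorm {R n} x.
Arguments vle {R n} x y.
Arguments in_ImG {R n k} G x.
Arguments unmergeG {R n k} G delta x.
Arguments in_GridG {R n k} G x.
Arguments delta_lt_half_c {R n k} G delta.

Definition on_line (R : realType) (n : nat) (p y : 'rV[R]_n) : Prop :=
  exists t : R, y = p + t *: const_mx 1.

Arguments on_line {R n} p y.

Definition is_push (R : realType) (n : nat) (p q y : 'rV[R]_n) : Prop :=
  [/\ on_line p y, vle q y &
      forall z, on_line p z -> vle q z -> vle y z].

Arguments is_push {R n} p q y.

(* Main.v *)
Require Import Defs.
From mathcomp Require Import all_boot all_order all_algebra.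
From mathcomp Require Import reals.
From mathcomp Require Import lra.
Import Order.TTheory GRing.Theory Num.Theory.
Local Open Scope ring_scope.

Lemma grid_uniq (R : realType) (n : nat) (k : 'I_n -> nat) (G : @grid R n k)
    (delta : R) :
  (forall i, (0 < k i)%N) -> delta_lt_half_c G delta ->
  forall i (j j' : 'I_(k i)) (x : R),
  `|x - G i j| <= delta -> `|x - G i j'| <= delta -> G i j = G i j'.
Proof.
move=> hk hc i j j' x h1 h2.
have [//|hne] := eqVneq (G i j) (G i j').
exfalso.
pose X : 'rV[R]_n := \row_l (if l == i then G i j else G l (Ordinal (hk l))).
pose Y : 'rV[R]_n := \row_l (if l == i then G i j' else G l (Ordinal (hk l))).
have hX : in_ImG G X.
  move=> l; rewrite mxE; have [->|hl] := eqVneq l i.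
    by exists j.
  by exists (Ordinal (hk l)).
have hY : in_ImG G Y.
  move=> l; rewrite mxE; have [->|hl] := eqVneq l i.
    by exists j'.
  by exists (Ordinal (hk l)).
have hXY : X <> Y.
  move/(congr1 (fun M : 'rV[R]_n => M 0 i)); rewrite !mxE eqxx => E.
  by rewrite E eqxx in hne.
have hlt := hc X Y hX hY hXY.
have hs : supnorm (X - Y) <= `|G i j - G i j'|.
  rewrite /supnorm; apply: (big_ind (fun v => v <= `|G i j - G i j'|)) => //.
  - by move=> u v hu hv; rewrite ge_max hu hv.
  - move=> l _; rewrite /X /Y !mxE; have [_|hl] := eqVneq l i.
      by [].
    by rewrite subrr normr0 normr_ge0.
have ht := ler_distD x (G i j) (G i j').
rewrite (distrC (G i j) x) in ht.
lra.
Qed.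

Theorem mainTheorem17 (R : realType) (n : nat) (k : 'I_n -> nat) (G : @grid R n k)
    (delta : R) (a b : 'rV[R]_n) :
  (forall i, (0 < k i)%N) ->
  delta_lt_half_c G delta ->
  (forall eps : R, 0 < eps ->
     exists g, in_GridG G g /\ supnorm (a - g) <= delta + eps) ->
  vle a b ->
  (exists y, is_push (unmergeG G delta (mergeG G delta a)) a y /\
             is_push (unmergeG G delta (mergeG G delta a)) b y) ->
  mergeG G delta a = mergeG G delta b.
Proof.
move=> hk hc _ hab [y [[_ hay hmin] [_ hby _]]].
set p := unmergeG G delta (mergeG G delta a).
have hU : forall i, p 0 i = mergeG G delta (mergeG G delta a) 0 i +
   (if [exists j, `|mergeG G delta a 0 i - G i j| <= delta] then delta else 0).
  move=> i; rewrite /p /unmergeG mxE summxE big_mkcond /= (bigD1 i) //=.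
  rewrite big1 ?addr0.
    by rewrite !mxE !eqxx mulr1.
  move=> l hl; case: ifP => _ //; rewrite !mxE eq_sym (negbTE hl).
  by rewrite andbF mulr0.
have key : forall i, a 0 i <= p 0 i /\
   (b 0 i <= p 0 i -> a 0 i <= b 0 i -> mergeG G delta a 0 i = mergeG G delta b 0 i).
  move=> i; rewrite hU.
  rewrite /mergeG !mxE.
  case: (pickP (fun j => `|a 0 i - G i j| <= delta)) => [j hj|hno].
    have hd : 0 <= delta by apply: le_trans hj; rewrite normr_ge0.
    case: existsP => [_|hne]; last first.
      by exfalso; apply: hne; exists j; rewrite subrr normr0.
    case: (pickP (fun j0 => `|G i j - G i j0| <= delta)) => [j' hj'|hno'].
      2: by have := hno' j; rewrite subrr normr0 hd.
    have E : G i j = G i j' by apply: (@grid_uniq R n k G delta hk hc i j j' (G i j)); rewrite ?subrr ?normr0.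
    rewrite -E; split.
      move: hj; rewrite ler_norml; lra.
    move=> hb hab'.
    have hbj : `|b 0 i - G i j| <= delta.
      move: hj; rewrite !ler_norml; lra.
    case: (pickP (fun j0 => `|b 0 i - G i j0| <= delta)) => [j'' hj''|hno''].
      exact: (@grid_uniq R n k G delta hk hc i j j'' (b 0 i) hbj hj'').
    by have := hno'' j; rewrite hbj.
  case: existsP => [[j hj]|_]; first by have := hno j; rewrite hj.
  case: (pickP (fun j0 => `|a 0 i - G i j0| <= delta)) => [j' hj'|_]; first by have := hno j'; rewrite hj'.
  rewrite addr0; split => // hb hab'.
  have -> : b 0 i = a 0 i by apply/eqP; rewrite eq_le hb hab'.
  case: (pickP (fun j0 => `|a 0 i - G i j0| <= delta)) => [j hj|//]; by have := hno j; rewrite hj.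
have hyp : vle y p.
  apply: hmin; first by exists 0; rewrite scale0r addr0.
  by move=> i; case: (key i).
apply/rowP => i.
case: (key i) => _; apply; last exact: hab.
exact: le_trans (hby i) (hyp i).
Qed.
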